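(* Let $0\le s<n$, $A\in M_{s+1,n-s}$, and $\mathcal L=\{(x,\tilde xA)\mid x\in\mathbb R^s\}\subset\mathbb R^n$ with $\tilde x=(1,x)$. Then for every $v<\omega(A)$ there exists an infinite subset $\mathcal A\subset\mathbb Z\times\mathbb Z^n$ such that for every $y\in\mathcal L$, the inequality $|yq+p|<\|q\|^{-v}$ holds for all but finitely many $(p,q)\in\mathcal A$.
   Context: $yq=\sum_{i=1}^ny_iq_i$ for the row vector $y$ and $q\in\mathbb Z^n$. $\omega(A)$ is the supremum of $u>0$ for which there are infinitely many $q\in\mathbb Z^{n-s}$ with $\|Aq+p\|<\|q\|^{-u}$ for some $p\in\mathbb Z^{s+1}$. *)

(* Defs.v *)
From HB Require Import structures.
From mathcomp Require Import all_boot all_order all_algebra.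
From mathcomp Require Import all_classical all_reals all_analysis.
Set Implicit Arguments. Unset Strict Implicit. Unset Printing Implicit Defensive.
Import Order.TTheory GRing.Theory Num.Theory.
Local Open Scope classical_set_scope.
Local Open Scope ring_scope.

Definition intmx (R : realType) (m k : nat) (M : 'M[int]_(m, k)) : 'M[R]_(m, k) :=
  map_mx (fun z : int => z%:~R) M.

Definition supn (R : realType) (m k : nat) (M : 'M[R]_(m, k)) : R :=
  \big[Num.max/0]_(i < m) \big[Num.max/0]_(j < k) `|M i j|.

Definition omega_set (R : realType) (s n : nat) (A : 'M[R]_(s.+1, n - s)) : set R :=
  [set u : R | 0 < u /\
     ~ finite_set [set q : 'cV[int]_(n - s) | exists p : 'cV[int]_(s.+1),
          supn (A *m intmx R q + intmx R p) < (supn (intmx R q)) `^ (- u)]].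

Definition omega (R : realType) (s n : nat) (A : 'M[R]_(s.+1, n - s)) : \bar R :=
  ereal_sup [set u%:E | u in omega_set A].

Definition xtilde (R : realType) (s : nat) (x : 'rV[R]_s) : 'rV[R]_(s.+1) :=
  row_mx (1 : 'rV[R]_1) x.

Definition Lset (R : realType) (s n : nat) (A : 'M[R]_(s.+1, n - s)) : set 'rV[R]_(s + (n - s)) :=
  [set row_mx x (xtilde x *m A) | x in [set: 'rV[R]_s]].

(* Main.v *)
Require Import Defs.
From HB Require Import structures.
From mathcomp Require Import all_boot all_order all_algebra.
From mathcomp Require Import all_classical all_reals all_analysis.
From mathcomp Require Import zify ring lra.
Import Order.TTheory GRing.Theory Num.Theory.
Local Open Scope classical_set_scope.
Local Open Scope ring_scope.

Set Implicit Arguments. Unset Strict Implicit.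
Section Aux.
Variable R : realType.

Lemma supn_ge0 m k (M : 'M[R]_(m, k)) : 0 <= supn M.
Proof.
rewrite /supn; apply: (big_ind (fun x => 0 <= x)) => //.
  by move=> a b ha hb; rewrite le_max ha.
move=> i _; apply: (big_ind (fun x => 0 <= x)) => //.
by move=> a b ha hb; rewrite le_max ha.
Qed.

Lemma supn_ge m k (M : 'M[R]_(m, k)) i j : `|M i j| <= supn M.
Proof.
rewrite /supn; apply: le_trans (le_bigmax _ _ i).
exact: (le_bigmax _ (fun j => `|M i j|) j).
Qed.

Lemma supn_le m k (M : 'M[R]_(m, k)) c :
  0 <= c -> (forall i j, `|M i j| <= c) -> supn M <= c.
Proof.
move=> c0 h; rewrite /supn; apply: bigmax_le => // i _.
by apply: bigmax_le => // j _.
Qed.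

Lemma mulmx_bound m k l (B : 'M[R]_(m, k)) (M : 'M[R]_(k, l)) i j :
  `|(B *m M) i j| <= (\sum_r `|B i r|) * supn M.
Proof.
rewrite mxE mulr_suml; apply: le_trans (ler_norm_sum _ _ _) _.
apply: ler_sum => r _; rewrite normrM; apply: ler_wpM2l => //.
exact: supn_ge.
Qed.

Lemma xtilde_mul s (x : 'rV[R]_s) (P : 'M[R]_(1 + s, 1)) :
  (xtilde x *m P) 0 0 = usubmx P 0 0 + (x *m dsubmx P) 0 0.
Proof.
transitivity ((row_mx (1 : 'rV[R]_1) x *m col_mx (usubmx P) (dsubmx P)) 0 0).
  by rewrite vsubmxK.
by rewrite mul_row_col mul1mx mxE.
Qed.

Lemma finite_bounded k (T : R) :
  finite_set [set q : 'cV[int]_k | supn (intmx R q) <= T].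
Proof.
have [N hN] : exists N : nat, T <= N%:R.
  exists (Num.Def.archi_bound `|T|); apply: le_trans (ltW (archi_boundP (normr_ge0 T))).
  exact: ler_norm.
pose g (f : {ffun 'I_k * 'I_1 -> 'I_(N + N).+1}) : 'cV[int]_k :=
  \matrix_(i, j) ((f (i, j) : nat)%:Z - N%:Z).
apply: sub_finite_set (finite_image g (@finite_finset _ setT)).
move=> q hq; exists [ffun ij => inord (absz (q ij.1 ij.2 + N%:Z))] => //.
apply/matrixP => i j.
have hb : `|q i j| <= N%:Z.
  rewrite -(ler_int R) intr_norm.
  have := le_trans (@supn_ge _ _ (intmx R q) i j) (le_trans hq hN).
  by rewrite /intmx mxE.
rewrite !mxE ffunE /= inordK; last by lia.
rewrite gez0_abs; last by lia.
by rewrite addrK.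
Qed.

Definition Xc s (x : 'rV[R]_s) := \sum_j `|xtilde x 0 j| + 1.
Definition Kc s k (A : 'M[R]_(s.+1, k)) := 1 + \sum_i \sum_j `|A i j|.
Definition Mc s k (x : 'rV[R]_s) (A : 'M[R]_(s.+1, k)) u v :=
  (ln (Xc x) + `|v| * ln (Kc A)) / (u - v).

Lemma key_id s k (A : 'M[R]_(s.+1, k)) (x : 'rV[R]_s) (q : 'cV[int]_k)
  (p : 'cV[int]_(1 + s)) :
  (row_mx x (xtilde x *m A) *m intmx R (col_mx (dsubmx p) q)) 0 0
    + (usubmx p 0 0)%:~R
  = (xtilde x *m (A *m intmx R q + intmx R p)) 0 0.
Proof.
rewrite /intmx map_col_mx mul_row_col mulmxDr mulmxA mxE [RHS]mxE.
rewrite (xtilde_mul x (map_mx _ p)).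
rewrite map_dsubmx [usubmx (map_mx _ p) 0 0]mxE [map_mx _ p _ _]mxE.
rewrite [usubmx p 0 0]mxE; lra.
Qed.

Lemma intmx_col m1 m2 l (a : 'M[int]_(m1, l)) (b : 'M[int]_(m2, l)) :
  intmx R (col_mx a b) = col_mx (intmx R a) (intmx R b).
Proof. exact: map_col_mx. Qed.

Lemma intmx_dsub m1 m2 l (a : 'M[int]_(m1 + m2, l)) :
  intmx R (dsubmx a) = dsubmx (intmx R a).
Proof. exact: map_dsubmx. Qed.

Lemma key s k (A : 'M[R]_(s.+1, k)) (x : 'rV[R]_s) (q : 'cV[int]_k)
  (p : 'cV[int]_(1 + s)) u v :
  0 < u -> v < u ->
  supn (A *m intmx R q + intmx R p) < supn (intmx R q) `^ (-u) ->
  Num.max 1 (expR (Mc x A u v)) < supn (intmx R q) ->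
  `|(row_mx x (xtilde x *m A) *m intmx R (col_mx (dsubmx p) q)) 0 0
      + (usubmx p 0 0)%:~R|
   < supn (intmx R (col_mx (dsubmx p) q)) `^ (- v).
Proof.
move=> u0 vu hE; rewrite gt_max => /andP[t1 tM].
rewrite key_id.
set t := supn (intmx R q) in hE t1 tM *.
set E := A *m intmx R q + intmx R p in hE *.
set Q := intmx R (col_mx (dsubmx p) q).
set sQ := supn Q.
have t0 : 0 < t by apply: lt_trans ltr01 t1.
have lt0 : 0 <= ln t by apply: ln_ge0; apply: ltW.
have hE1 : supn E <= 1.
  apply: ltW; apply: lt_le_trans hE _.
  rewrite /powR gt_eqF // -expR0 ler_expR.
  have := mulr_ge0 (ltW u0) lt0; lra.
have hQlo : t <= sQ.
  apply: supn_le; first exact: supn_ge0.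
  move=> i j; have := supn_ge Q (rshift s i) j.
  by rewrite /sQ /Q intmx_col col_mxEd.
set CA := \sum_i \sum_j `|A i j|.
have CA0 : 0 <= CA by apply: sumr_ge0 => i _; apply: sumr_ge0.
have KCA : Kc A = 1 + CA by [].
have hQhi : sQ <= Kc A * t.
  apply: supn_le; first by rewrite KCA; apply: mulr_ge0; [lra|apply: ltW].
  move=> i j; rewrite /Q intmx_col.
  case: (split_ordP i) => i' ->; [rewrite col_mxEu | rewrite col_mxEd].
    rewrite intmx_dsub mxE.
    set r := rshift 1 i'.
    have -> : intmx R p r j = E r j - (A *m intmx R q) r j.
      by rewrite /E [E r j]mxE; ring.
    apply: le_trans (ler_normB _ _) _.
    have h1 := supn_ge E r j.
    have h2 := mulmx_bound A (intmx R q) r j.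
    have h3 : \sum_c `|A r c| <= CA.
      rewrite /CA (bigD1 r) //= lerDl; apply: sumr_ge0 => i0 _; apply: sumr_ge0.
      by move=> *.
    have h4 := ler_wpM2r (ltW t0) h3.
    rewrite KCA -/t in h2 *; nra.
  have := supn_ge (intmx R q) i' j; rewrite -/t KCA; nra.
have sQ0 : 0 < sQ by apply: lt_le_trans t0 hQlo.
apply: le_lt_trans (mulmx_bound _ _ _ _) _.
have hS : 0 <= \sum_j `|xtilde x 0 j| by apply: sumr_ge0.
have X0 : 0 < Xc x by rewrite /Xc; lra.
apply: (@le_lt_trans _ _ (Xc x * supn E)).
  by rewrite /Xc mulrDl mul1r lerDl supn_ge0.
apply: (@lt_le_trans _ _ (Xc x * t `^ (-u))).
  by rewrite ltr_pM2l.
have eX : Xc x = expR (ln (Xc x)) by rewrite lnK // posrE.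
rewrite /powR !gt_eqF // {1}eX -expRD ler_expR.
have hM : Mc x A u v <= ln t.
  rewrite -(expRK (Mc x A u v)) ler_ln ?posrE ?expR_gt0 //; exact: ltW.
have hl1 : ln t <= ln sQ by rewrite ler_ln ?posrE.
have K1 : 1 <= Kc A by rewrite KCA; lra.
have K0 : 0 < Kc A by apply: lt_le_trans ltr01 K1.
have hl2 : ln sQ <= ln (Kc A) + ln t.
  rewrite -lnM ?posrE // ler_ln ?posrE //; exact: mulr_gt0.
have lK0 : 0 <= ln (Kc A) by apply: ln_ge0.
have eM : (u - v) * Mc x A u v = ln (Xc x) + `|v| * ln (Kc A).
  rewrite /Mc mulrC -mulrA mulVf ?mulr1 //; lra.
have h1 : 0 <= (u - v) * (ln t - Mc x A u v) by apply: mulr_ge0; lra.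
case: (lerP 0 v) => v0.
  rewrite ger0_norm // in eM.
  have := ler_wpM2l v0 hl2; nra.
rewrite ltr0_norm // in eM.
have nv : 0 <= - v by lra.
have := ler_wpM2l nv hl1.
have := mulr_ge0 nv lK0.
nra.
Qed.

End Aux.

Unset Implicit Arguments. Set Strict Implicit.

Theorem lemma5p4 (R : realType) (s n : nat) (hsn : (s < n)%N)
  (A : 'M[R]_(s.+1, n - s)) (v : R) :
  (v%:E < omega A)%E ->
  exists AA : set (int * 'cV[int]_(s + (n - s))),
    ~ finite_set AA /\
    forall y : 'rV[R]_(s + (n - s)), Lset A y ->
      finite_set (AA `\` [set pq | `|(y *m intmx R pq.2) 0 0 + (pq.1)%:~R|
                                     < (supn (intmx R pq.2)) `^ (- v)]).
Proof.
move=> /ereal_sup_gt [_ [u Su <-]]; rewrite lte_fin => vu.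
case: Su => u0 Sinf.
set S := [set q : 'cV[int]_(n - s) | exists p : 'cV[int]_(s.+1),
          supn (A *m intmx R q + intmx R p) < (supn (intmx R q)) `^ (- u)] in Sinf.
have : forall q : 'cV[int]_(n - s), exists p : 'cV[int]_(1 + s), S q ->
    supn (A *m intmx R q + intmx R p) < (supn (intmx R q)) `^ (- u).
  move=> q; case: (pselect (S q)) => [[p hp]|nS]; first by exists p.
  by exists 0.
case/choice => pf hpf.
pose F (q : 'cV[int]_(n - s)) : int * 'cV[int]_(s + (n - s)) :=
  (usubmx (pf q) 0 0, col_mx (dsubmx (pf q)) q).
exists (F @` S); split.
  move=> fin; apply: Sinf.
  apply: sub_finite_set (finite_image (fun pq => dsubmx pq.2) fin).
  move=> q Sq; exists (F q); first by exists q.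
  by rewrite /F /= col_mxKd.
move=> y [x _ <-].
apply: sub_finite_set (finite_image F
   (finite_bounded (n - s) (Num.max 1 (expR (Mc x A u v))))).
move=> _ [[q Sq <-] ngood]; exists q => //=.
rewrite leNgt; apply/negP => hT; apply: ngood => /=.
exact: key u0 vu (hpf q Sq) hT.
Qed.
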